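(* Let $X\subset \operatorname{int}(S^1\times[-1,1])$ be an annular continuum, and let $V$ and hairs be as defined in the context. Assume that there exists a sequence $\{\gamma_n\}_{n\ge1}$ of hairs of $V$ with $\min(\gamma_n)_1 \to -\infty$, and that for every sequence $\{\gamma_n\}_{n\ge 1}$ of hairs of $V$ with $\min(\gamma_n)_1\to-\infty$ one has $\max(\gamma_n)_1\to+\infty$. Then for every $R>1$ there exists $L'<0$ such that whenever $\gamma$ is a hair of $V+k$ for some integer $k\ge 0$ and $(\gamma(1))_1\le L'$, we have $R\in(\gamma)_1$.
   Context: $\pi\colon\mathbb{R}\times[-1,1]\to S^1\times[-1,1]$ is the universal cover, with deck transformation $T(x,y)=(x+1,y)$; for a set $S$ and $k\in\mathbb{Z}$, $S+k$ denotes $T^k(S)$. For a point or set $S$, $(S)_1$ denotes its image under the first-coordinate projection. An annular continuum $X\subset\operatorname{int}(S^1\times[-1,1])$ is a continuum whose complement consists of exactly two components, $U_-\supset S^1\times\{-1\}$ and $U_+\supset S^1\times\{1\}$. Let $\tilde X=\pi^{-1}(X)$, $\tilde U_+=\pi^{-1}(U_+)$. Let $\eta=\max\{y:(0,y)\in\tilde X\}$, $x_0=(0,\eta)$, $\beta$ the vertical segment from $(0,1)$ to $x_0$, and $\beta'=\beta\setminus\{x_0\}$. The arcs $\beta'$ and $\beta'+1$ bound a region in $\tilde U_+$ containing $(0,1)\times\{1\}$; $V$ is the closure of this region relative to $\tilde U_+$. A hair of $V$ is an arc $\gamma\colon[0,1]\to V$ with $\gamma(0)\in\mathbb{R}\times\{1\}$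 (identified with its image). An arc $\gamma$ is a hair of $V+k$ if $\gamma-k$ is a hair of $V$. (The paper phrases the hypothesis on $\gamma$ as ''$\gamma$ is a hair contained in $V^+=\bigcup_{j\ge 0}(V+j)$''.) *)

(* Defs.v *)
From HB Require Import structures.
From mathcomp Require Import all_boot all_order all_algebra.
From mathcomp Require Import all_classical all_reals all_analysis.
Set Implicit Arguments. Unset Strict Implicit. Unset Printing Implicit Defensive.
Import Order.TTheory GRing.Theory Num.Theory.
Import numFieldNormedType.Exports.
Local Open Scope classical_set_scope.
Local Open Scope ring_scope.

Section Annulus.
Variable R : realType.

(* the strip R x [-1,1] (universal cover of the closed annulus) *)
Definition strip : set (R * R) := [set p | -1 <= p.2 <= 1].

(* the closed annulus S^1 x [-1,1], realised concretely in the plane as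
   {1 <= |z| <= 3} via the covering map (x,y) |-> (2+y) e^{2 pi i x} *)
Definition cover (p : R * R) : R * R :=
  ((2 + p.2) * cos (2 * pi * p.1), (2 + p.2) * sin (2 * pi * p.1)).

Definition annulus : set (R * R) := cover @` strip.

Definition annulus_interior : set (R * R) := cover @` [set p | -1 < p.2 < 1].

Definition annular_continuum (X Um Up : set (R * R)) : Prop :=
  [/\ X `<=` annulus_interior, X !=set0, compact X & connected X] /\
  [/\ (exists2 a, (annulus `\` X) a & Um = connected_component (annulus `\` X) a),
      (exists2 b, (annulus `\` X) b & Up = connected_component (annulus `\` X) b),
      Um `&` Up = set0 /\ Um `|` Up = annulus `\` X,
      cover @` [set p | p.2 = -1] `<=` Um &
      cover @` [set p | p.2 = 1] `<=` Up].

Definition lift (A : set (R * R)) : set (R * R) := strip `&` cover @^-1` A.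

(* S + k = T^k(S) with T(x,y) = (x+1,y) *)
Definition shift (k : R) (S : set (R * R)) : set (R * R) :=
  [set p | S (p.1 - k, p.2)].

Definition is_eta (X : set (R * R)) (eta : R) : Prop :=
  lift X (0, eta) /\ forall y, lift X (0, y) -> y <= eta.

Definition beta' (eta : R) : set (R * R) := [set p | p.1 = 0 /\ eta < p.2 <= 1].

(* V: closure, relative to lift Up, of the region of lift Up bounded by
   beta' and beta'+1 containing (0,1) x {1} (i.e. the component of
   lift Up minus (beta' u (beta'+1)) containing (1/2,1)) *)
Definition Vset (Up : set (R * R)) (eta : R) : set (R * R) :=
  closure (connected_component
             (lift Up `\` (beta' eta `|` shift 1 (beta' eta))) (2^-1, 1))
  `&` lift Up.

Definition I01 : set R := [set t | 0 <= t <= 1].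

Definition hair (V : set (R * R)) (g : R -> R * R) : Prop :=
  [/\ {within I01, continuous g},
      (forall s t, I01 s -> I01 t -> g s = g t -> s = t),
      g @` I01 `<=` V &
      (g 0).2 = 1].

Definition hair_shift (V : set (R * R)) (k : nat) (g : R -> R * R) : Prop :=
  hair V (fun t => ((g t).1 - k%:R, (g t).2)).

Definition min1_to_minfty (gs : nat -> R -> R * R) : Prop :=
  forall M : R, exists N, forall n, (N <= n)%N ->
    exists2 t, I01 t & ((gs n t).1 <= M).

Definition max1_to_pinfty (gs : nat -> R -> R * R) : Prop :=
  forall M : R, exists N, forall n, (N <= n)%N ->
    exists2 t, I01 t & (M <= (gs n t).1).

End Annulus.

(* Main.v *)
Require Import Defs.
From HB Require Import structures.
From mathcomp Require Import all_boot all_order all_algebra.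
From mathcomp Require Import all_classical all_reals all_analysis.
From mathcomp Require Import lra.
Import Order.TTheory GRing.Theory Num.Theory.
Import numFieldNormedType.Exports.
Local Open Scope classical_set_scope.
Local Open Scope ring_scope.

Lemma within_fst (R : realType) (A : set R) (g : R -> R * R) :
  {within A, continuous g} -> {within A, continuous (fun t => (g t).1)}.
Proof.
move=> Hg x.
apply: (continuous_comp (Hg x)).
exact: cvg_fst.
Qed.

Theorem lemma5 (R : realType) (X Um Up : set (R * R)) (eta : R) :
  annular_continuum X Um Up ->
  is_eta X eta ->
  (exists gs : nat -> R -> R * R,
      (forall n, hair (Vset Up eta) (gs n)) /\ min1_to_minfty gs) ->
  (forall gs : nat -> R -> R * R,
      (forall n, hair (Vset Up eta) (gs n)) ->
      min1_to_minfty gs -> max1_to_pinfty gs) ->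
  forall r : R, 1 < r ->
  exists2 L' : R, L' < 0 &
    forall (k : nat) (g : R -> R * R),
      hair_shift (Vset Up eta) k g ->
      (g 1).1 <= L' ->
      exists2 t, I01 t & (g t).1 = r.
Proof.
move=> _ _ _ Hall r r1.
apply: contrapT => Hno.
have H n : exists kg : nat * (R -> R * R),
    [/\ hair_shift (Vset Up eta) kg.1 kg.2,
        (kg.2 1).1 <= - (n.+1)%:R &
        ~ exists2 t, I01 t & (kg.2 t).1 = r].
  apply: contrapT => Hn; apply: Hno; exists (- (n.+1)%:R).
    by rewrite oppr_lt0 ltr0n.
  move=> k g hs le; apply: contrapT => nex; apply: Hn.
  by exists (k, g).
have [f Hf] := choice H.
pose gs n := fun t => (((f n).2 t).1 - ((f n).1)%:R, ((f n).2 t).2).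
have Hh n : hair (Vset Up eta) (gs n) by have [] := Hf n.
have Hmin : min1_to_minfty gs.
  move=> M; exists (Num.truncn (- M)) => n Nn; exists 1.
    by rewrite /I01 /= ler01 lexx.
  have [_ le _] := Hf n.
  rewrite /gs /=.
  have h1 := truncnS_gt (- M).
  have h2 : (Num.truncn (- M)).+1%:R <= (n.+1)%:R :> R by rewrite ler_nat ltnS.
  have h3 : 0 <= ((f n).1)%:R :> R by [].
  lra.
have [N HN] := Hall gs Hh Hmin r.
have [t It rle] := HN N (leqnn N).
have [hs le nex] := Hf N.
apply: nex.
have [c Hc1 Hc2] : exists2 c, c \in `[t, 1] & (gs N c).1 = r - ((f N).1)%:R.
  move: It; rewrite /I01 => /andP [t0 t1].
  apply: IVT => //.
    have Hc : {within @I01 R, continuous (fun c => (gs N c).1)}.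
      by apply: within_fst; have [] := Hh N.
    apply: (continuous_subspaceW _ Hc).
    by move=> x; rewrite /= in_itv /= => /andP [? ?]; apply/andP; split => //; apply: le_trans t0 _.
  move: rle; rewrite /gs /= => rle.
  have h1 : 0 <= (N.+1)%:R :> R by [].
  have hk : 0 <= ((f N).1)%:R :> R by [].
  rewrite /= ge_min le_max; apply/andP; split; apply/orP; [right|left].
    have le' : ((f N).2 1).1 <= -1.
      by apply: le_trans le _; rewrite lerN2 ler1n.
    lra.
  lra.
exists c.
  move: It Hc1; rewrite /I01 in_itv /= => /andP [t0 t1] /andP [? ?].
  by apply/andP; split => //; apply: le_trans t0 _.
by move: Hc2; rewrite /gs /= => ?; lra.
Qed.
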